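(* Let $\mathbb A=(A_n)_{n\in\mathbb N}$ be a sequence of invertible linear operators on $\mathbb R^d$ and $\mathcal S=\{\|\cdot\|_n;\ n\in\mathbb N\}$ a sequence of norms on $\mathbb R^d$ such that there exist $K,a>0$ with $\|\mathcal A(m,n)x\|_m\le K(m/n)^a\|x\|_n$ and $\|\mathcal A(n,m)x\|_n\le K(m/n)^a\|x\|_m$ for all $m\ge n$ and $x$. Let $\mathbb B=(B_n)_{n\in\mathbb Z^+}$ with $B_n=\mathcal A(2^{n+1},2^n)$ and $\tilde{\mathcal S}=\{\|\cdot\|_{2^n};\ n\in\mathbb Z^+\}$. Then there exist $1\le r\le d$ and $a_1\le b_1<\dots<a_r\le b_r$ such that $$\Sigma_{ED,\mathbb B,\tilde{\mathcal S}}=\bigcup_{i=1}^r[a_i,b_i]\quad\text{and}\quad\Sigma_{PD,\mathbb A,\mathcal S}=\bigcup_{i=1}^r\Big[\frac{\log a_i}{\log2},\frac{\log b_i}{\log2}\Big].$$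
   Context: $\mathbb N=\{1,2,\dots\}$, $\mathbb Z^+=\{0,1,\dots\}$. For invertible $(C_n)$, $\mathcal C(m,n)=C_{m-1}\cdots C_n$ ($m>n$), $\mathrm{Id}$ ($m=n$), $C_m^{-1}\cdots C_{n-1}^{-1}$ ($m<n$). Strong polynomial dichotomy of $(C_n)_{n\in\mathbb N}$ w.r.t. $\{\|\cdot\|_n\}$: there exist $K>0$, $a\ge\lambda>0$, projections $P_n$ with $C_nP_n=P_{n+1}C_n$ and, for $m\ge n$, $x$, $Q_m=\mathrm{Id}-P_m$: $\|\mathcal C(m,n)P_nx\|_m\le K(m/n)^{-\lambda}\|x\|_n$, $\|\mathcal C(n,m)Q_mx\|_n\le K(m/n)^{-\lambda}\|x\|_m$, $\|\mathcal C(m,n)x\|_m\le K(m/n)^a\|x\|_n$, $\|\mathcal C(n,m)x\|_n\le K(m/n)^a\|x\|_m$. Strong exponential dichotomy of $(C_n)_{n\in\mathbb Z^+}$ w.r.t. $\{|\cdot|_n\}$: same with $(m/n)^{-\lambda}$ replaced by $e^{-\lambda(m-n)}$ and $(m/n)^a$ by $e^{a(m-n)}$. $\Sigma_{PD,\mathbb A,\mathcal S}$: set of $\tau\in\mathbb R$ such that $(((n+1)/n)^{-\tau}A_n)_{n\in\mathbb N}$ does not admit a strong polynomial dichotomy w.r.t. $\mathcal S$. $\Sigma_{ED,\mathbb B,\tilde{\mathcal S}}$: set of $\tau>0$ such that $(\tau^{-1}B_n)_{n\in\mathbb Z^+}$ does not admit a strong exponential dichotomy w.r.t. $\tilde{\mathcal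 S}$. *)

(* Defs.v *)
From HB Require Import structures.
From mathcomp Require Import all_boot all_order all_algebra.
From mathcomp Require Import all_classical all_reals.
From mathcomp Require Import all_analysis.
Set Implicit Arguments. Unset Strict Implicit. Unset Printing Implicit Defensive.
Import Order.TTheory GRing.Theory Num.Theory.
Local Open Scope ring_scope.
Local Open Scope classical_set_scope.

Section Defs.
Variables (R : realType) (d : nat).

Definition is_norm (f : 'cV[R]_d -> R) : Prop :=
  [/\ forall x, 0 <= f x,
      forall x, f x = 0 -> x = 0,
      forall (c : R) x, f (c *: x) = `|c| * f x
    & forall x y, f (x + y) <= f x + f y].

Fixpoint cocycle_fw (C : nat -> 'M[R]_d) (n k : nat) : 'M[R]_d :=
  match k with
  | 0 => 1%:M
  | k'.+1 => C (n + k')%N *m cocycle_fw C n k'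
  end.

Definition cocycle (C : nat -> 'M[R]_d) (m n : nat) : 'M[R]_d :=
  if (n <= m)%N then cocycle_fw C n (m - n)
  else invmx (cocycle_fw C m (n - m)).

Definition strong_poly_dichotomy (C : nat -> 'M[R]_d)
    (N : nat -> 'cV[R]_d -> R) : Prop :=
  exists (K a lam : R) (P : nat -> 'M[R]_d),
    [/\ 0 < K, 0 < lam & lam <= a] /\
    [/\         (forall n, (0 < n)%N -> P n *m P n = P n),
        (forall n, (0 < n)%N -> C n *m P n = P n.+1 *m C n) &
        (forall m n, (0 < n)%N -> (n <= m)%N -> forall x : 'cV[R]_d,
          [/\ N m (cocycle C m n *m (P n *m x))
                <= K * ((m%:R / n%:R) `^ (- lam)) * N n x,
              N n (cocycle C n m *m ((1%:M - P m) *m x))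
                <= K * ((m%:R / n%:R) `^ (- lam)) * N m x,
              N m (cocycle C m n *m x) <= K * ((m%:R / n%:R) `^ a) * N n x &
              N n (cocycle C n m *m x) <= K * ((m%:R / n%:R) `^ a) * N m x])].

Definition strong_exp_dichotomy (C : nat -> 'M[R]_d)
    (N : nat -> 'cV[R]_d -> R) : Prop :=
  exists (K a lam : R) (P : nat -> 'M[R]_d),
    [/\ 0 < K, 0 < lam & lam <= a] /\
    [/\         (forall n, P n *m P n = P n),
        (forall n, C n *m P n = P n.+1 *m C n) &
        (forall m n, (n <= m)%N -> forall x : 'cV[R]_d,
          [/\ N m (cocycle C m n *m (P n *m x))
                <= K * expR (- lam * (m%:R - n%:R)) * N n x,
              N n (cocycle C n m *m ((1%:M - P m) *m x))
                <= K * expR (- lam * (m%:R - n%:R)) * N m x,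
              N m (cocycle C m n *m x) <= K * expR (a * (m%:R - n%:R)) * N n x &
              N n (cocycle C n m *m x) <= K * expR (a * (m%:R - n%:R)) * N m x])].

Definition Sigma_PD (A : nat -> 'M[R]_d) (N : nat -> 'cV[R]_d -> R) : set R :=
  [set tau | ~ strong_poly_dichotomy
                 (fun n => ((n.+1)%:R / n%:R) `^ (- tau) *: A n) N].

Definition Sigma_ED (B : nat -> 'M[R]_d) (N : nat -> 'cV[R]_d -> R) : set R :=
  [set tau | 0 < tau /\ ~ strong_exp_dichotomy (fun n => tau^-1 *: B n) N].

End Defs.

(* Main.v *)
Require Import Defs.
From HB Require Import structures.
From mathcomp Require Import all_boot all_order all_algebra.
From mathcomp Require Import all_classical all_reals.
From mathcomp Require Import all_analysis.
Import Order.TTheory GRing.Theory Num.Theory.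
Local Open Scope ring_scope.
Local Open Scope classical_set_scope.
From mathcomp Require Import zify ring lra.
Set Implicit Arguments. Unset Strict Implicit. Unset Printing Implicit Defensive.

Section Cocycle.
Variables (R : realType) (d : nat).
Implicit Types (C : nat -> 'M[R]_d).

Lemma fwD C n k1 k2 :
  cocycle_fw C n (k1 + k2) = cocycle_fw C (n + k1) k2 *m cocycle_fw C n k1.
Proof.
elim: k2 => [|k2 IH]; first by rewrite addn0 /= mul1mx.
by rewrite addnS /= IH mulmxA addnA.
Qed.

Lemma fw_unit C lo n k : (forall j, (lo <= j)%N -> C j \in unitmx) ->
  (lo <= n)%N -> cocycle_fw C n k \in unitmx.
Proof.
move=> HC Hn; elim: k => [|k IH] /=; first exact: unitmx1.
by rewrite unitmx_mul IH HC ?andbT // (leq_trans Hn) // leq_addr.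
Qed.

Lemma invmx_uniq (X G : 'M[R]_d) : G \in unitmx -> X *m G = 1%:M -> X = invmx G.
Proof.
move=> uG h; rewrite -[X]mulmx1 -(mulmxV uG) mulmxA h mul1mx //.
Qed.

Definition Fb C lo a := cocycle_fw C lo (a - lo).

Lemma cocycleF C lo a b : (forall j, (lo <= j)%N -> C j \in unitmx) ->
  (lo <= a)%N -> (lo <= b)%N ->
  cocycle C a b = Fb C lo a *m invmx (Fb C lo b).
Proof.
move=> HC ha hb; rewrite /cocycle /Fb.
have uF : forall c, (lo <= c)%N -> cocycle_fw C lo (c - lo) \in unitmx.
  by move=> c hc; apply: fw_unit HC _.
case: leqP => hab.
  have -> : (a - lo = (b - lo) + (a - b))%N by lia.
  rewrite fwD subnKC // mulmxK //; exact: uF.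
have -> : (b - lo = (a - lo) + (b - a))%N by lia.
rewrite fwD subnKC //.
set G := cocycle_fw C a (b - a); set Fa := cocycle_fw C lo (a - lo).
have uG : G \in unitmx by apply: fw_unit HC _.
have uFa : Fa \in unitmx by exact: uF.
have uGF : G *m Fa \in unitmx by rewrite unitmx_mul uG uFa.
symmetry; apply: invmx_uniq => //.
have h1 : invmx (G *m Fa) *m G = invmx Fa.
  by apply: invmx_uniq => //; rewrite -mulmxA mulVmx.
by rewrite -mulmxA h1 mulmxV.
Qed.

Lemma cocycle_mul C lo a b c : (forall j, (lo <= j)%N -> C j \in unitmx) ->
  (lo <= a)%N -> (lo <= b)%N -> (lo <= c)%N ->
  cocycle C a b *m cocycle C b c = cocycle C a c.
Proof.
move=> HC ha hb hc; rewrite !(cocycleF HC) //.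
rewrite mulmxA mulmxKV //; exact: fw_unit HC _.
Qed.

Lemma cocycle_unit C lo a b : (forall j, (lo <= j)%N -> C j \in unitmx) ->
  (lo <= a)%N -> (lo <= b)%N -> cocycle C a b \in unitmx.
Proof.
move=> HC ha hb; rewrite (cocycleF HC) // unitmx_mul unitmx_inv.
by rewrite !(fw_unit _ HC).
Qed.

Lemma cocycle_nn C n : cocycle C n n = 1%:M.
Proof. by rewrite /cocycle leqnn subnn. Qed.

Lemma cocycle_S C n : cocycle C n.+1 n = C n.
Proof. by rewrite /cocycle leqnSn subSnn /= addn0 mulmx1. Qed.

Lemma cocycle_inv C lo a b : (forall j, (lo <= j)%N -> C j \in unitmx) ->
  (lo <= a)%N -> (lo <= b)%N -> cocycle C a b *m cocycle C b a = 1%:M.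
Proof. by move=> HC ha hb; rewrite (cocycle_mul HC) // cocycle_nn. Qed.

Lemma fw_scale C (f : nat -> R) n k :
  cocycle_fw (fun j => expR (f j.+1 - f j) *: C j) n k
  = expR (f (n + k)%N - f n) *: cocycle_fw C n k.
Proof.
elim: k => [|k IH] /=; first by rewrite addn0 subrr expR0 scale1r.
rewrite IH -scalemxAr scalemxAl scalerA -expRD -scalemxAl addnS.
by congr (expR _ *: _); lra.
Qed.

Lemma cocycle_scale C (f : nat -> R) lo a b :
  (forall j, (lo <= j)%N -> C j \in unitmx) -> (lo <= a)%N -> (lo <= b)%N ->
  cocycle (fun j => expR (f j.+1 - f j) *: C j) a b
  = expR (f a - f b) *: cocycle C a b.
Proof.
move=> HC ha hb.
have HC' : forall j, (lo <= j)%N -> expR (f j.+1 - f j) *: C j \in unitmx.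
  by move=> j hj; rewrite unitmxZ ?HC // unitfE gt_eqF ?expR_gt0.
rewrite (cocycleF HC') // (cocycleF HC) // /Fb !fw_scale !subnKC //.
rewrite invmxZ; last by rewrite unitmxZ ?(fw_unit _ HC) // unitfE gt_eqF ?expR_gt0.
rewrite -scalemxAl -scalemxAr scalerA -expRN -expRD; congr (expR _ *: _); lra.
Qed.

Lemma cocycle_intertw C (P : nat -> 'M[R]_d) lo a b :
  (forall j, (lo <= j)%N -> C j \in unitmx) ->
  (forall j, (lo <= j)%N -> C j *m P j = P j.+1 *m C j) ->
  (lo <= a)%N -> (lo <= b)%N ->
  cocycle C a b *m P b = P a *m cocycle C a b.
Proof.
move=> HC HP ha hb.
have HF : forall c, (lo <= c)%N -> Fb C lo c *m P lo = P c *m Fb C lo c.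
  move=> c hc; rewrite /Fb; have -> : c = (lo + (c - lo))%N by lia.
  rewrite addKn; elim: (c - lo)%N => [|k IH] /=; first by rewrite addn0 mul1mx mulmx1.
  rewrite -mulmxA IH mulmxA HP ?leq_addr // mulmxA addnS //.
have uF : forall c, (lo <= c)%N -> Fb C lo c \in unitmx.
  by move=> c hc; apply: fw_unit HC _.
rewrite (cocycleF HC) //.
have h : invmx (Fb C lo b) *m P b = P lo *m invmx (Fb C lo b).
  rewrite -[LHS]mulmx1 -(mulmxV (uF b hb)) !mulmxA -[invmx _ *m _ *m _]mulmxA.
  by rewrite -HF // mulmxA mulVmx ?uF // mul1mx.
by rewrite -mulmxA h mulmxA HF // mulmxA.
Qed.

End Cocycle.


Section Norms.
Variables (R : realType) (d : nat).

Lemma norm0 (f : 'cV[R]_d -> R) : is_norm f -> f 0 = 0.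
Proof. by case=> _ _ hZ _; have := hZ 0 0; rewrite scale0r normr0 mul0r. Qed.

Lemma normZp (f : 'cV[R]_d -> R) c x : is_norm f -> 0 <= c -> f (c *: x) = c * f x.
Proof. by case=> _ _ hZ _ hc; rewrite hZ ger0_norm. Qed.

Lemma norm_ge0 (f : 'cV[R]_d -> R) x : is_norm f -> 0 <= f x.
Proof. by case. Qed.

Lemma norm_small (f : 'cV[R]_d -> R) x : is_norm f ->
  (forall e, 0 < e -> f x <= e) -> x = 0.
Proof.
move=> hf h; case: (hf) => h0 h1 _ _; apply: h1.
have := h0 x; rewrite le_eqVlt => /orP[/eqP <-//|hp].
have := h _ (divr_gt0 hp (ltr0n R 2)); lra.
Qed.

Lemma small_exp (l A e : R) : 0 < l -> 0 <= A -> 0 < e ->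
  exists k : nat, A * expR (- (l * k%:R)) <= e.
Proof.
move=> hl hA he; exists (Num.Def.archi_bound (A / (e * l))).
set k := Num.Def.archi_bound _.
have hk : A / (e * l) < k%:R.
  by apply: archi_boundP; apply: divr_ge0 => //; apply: mulr_ge0; apply: ltW.
have hel : 0 < e * l by apply: mulr_gt0.
have hk' : A < k%:R * (e * l) by rewrite -ltr_pdivrMr.
have h1 := expR_ge1Dx (l * k%:R).
rewrite expRN ler_pdivrMr ?expR_gt0 //.
have hk0 : 0 <= (k%:R : R) by [].
nra.
Qed.

Lemma mx_ext (A B : 'M[R]_d) : (forall x : 'cV[R]_d, A *m x = B *m x) -> A = B.
Proof.
move=> h; apply/matrixP => i j; have := h (delta_mx j 0); rewrite -!colE.
by move/(congr1 (fun M : 'cV[R]_d => M i 0)); rewrite !mxE.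
Qed.

End Norms.

Lemma bnd (R : realType) (K K' a b X : R) : 0 <= K -> K <= K' -> a <= b -> 0 <= X ->
  K * expR a * X <= K' * expR b * X.
Proof.
move=> hK hKK hab hX; apply: ler_wpM2r => //; apply: ler_pM => //.
by rewrite ler_expR.
Qed.

Lemma Dge0 (R : realType) (m n : nat) : (n <= m)%N -> 0 <= (m%:R - n%:R : R).
Proof. by move=> h; rewrite subr_ge0 ler_nat. Qed.

Section Core.
Variables (R : realType) (d : nat) (C : nat -> 'M[R]_d) (M : nat -> 'cV[R]_d -> R).
Hypothesis HC : forall j, (0 <= j)%N -> C j \in unitmx.
Hypothesis HM : forall n, is_norm (M n).
Variables (Kg g : R).
Hypothesis hKg : 0 < Kg.
Hypothesis Hgr : forall m n, (n <= m)%N -> forall x,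
  M m (cocycle C m n *m x) <= Kg * expR (g * (m%:R - n%:R)) * M n x /\
  M n (cocycle C n m *m x) <= Kg * expR (g * (m%:R - n%:R)) * M m x.

Definition dichP s (P : nat -> 'M[R]_d) K lam :=
  (0 < K /\ 0 < lam) /\ [/\ (forall n, P n *m P n = P n),
      (forall n, C n *m P n = P n.+1 *m C n),
      (forall m n, (n <= m)%N -> forall x,
         M m (cocycle C m n *m (P n *m x)) <= K * expR ((s - lam) * (m%:R - n%:R)) * M n x)
    & (forall m n, (n <= m)%N -> forall x,
         M n (cocycle C n m *m ((1%:M - P m) *m x))
           <= K * expR (- (s + lam) * (m%:R - n%:R)) * M m x)].

Definition rkrel s k := exists P K lam, dichP s P K lam /\ \rank (P 0%N) = k.

Lemma dichP_open s s' P K lam : dichP s P K lam -> `|s - s'| < lam ->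
  dichP s' P K (lam - `|s - s'|).
Proof.
case=> [[hK hl] [hP hI hs hu]] hss; split; first by split => //; rewrite subr_gt0.
split => //.
  move=> m n hnm x; apply: le_trans (hs m n hnm x) _; apply: bnd => //.
  - exact: ltW.
  - apply: ler_wpM2r; first exact: Dge0.
    have := ler_norm (s - s'); lra.
  - exact: norm_ge0.
move=> m n hnm x; apply: le_trans (hu m n hnm x) _; apply: bnd => //.
- exact: ltW.
- apply: ler_wpM2r; first exact: Dge0.
  have := ler_norm (s' - s); rewrite distrC; lra.
- exact: norm_ge0.
Qed.

Lemma dich_hi s : g < s -> dichP s (fun _ => 1%:M) Kg (s - g).
Proof.
move=> hs; split; first by split => //; rewrite subr_gt0.
split.
- by move=> n; rewrite mul1mx.
- by move=> n; rewrite mul1mx mulmx1.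
- move=> m n hnm x; rewrite mul1mx.
  have -> : s - (s - g) = g by lra.
  exact: (@Hgr m n hnm x).1.
move=> m n hnm x; rewrite subrr mul0mx mulmx0 norm0 //.
apply: mulr_ge0; last exact: norm_ge0.
apply: mulr_ge0; [exact: ltW | exact: expR_ge0].
Qed.

Lemma dich_lo s : s < - g -> dichP s (fun _ => 0) Kg (- s - g).
Proof.
move=> hs; split; first by split => //; lra.
split.
- by move=> n; rewrite mul0mx.
- by move=> n; rewrite mul0mx mulmx0.
- move=> m n hnm x; rewrite mul0mx mulmx0 norm0 //.
  apply: mulr_ge0; last exact: norm_ge0.
  apply: mulr_ge0; [exact: ltW | exact: expR_ge0].
move=> m n hnm x; rewrite subr0 mul1mx.
have -> : - (s + (- s - g)) = g by lra.
exact: (@Hgr m n hnm x).2.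
Qed.

Lemma dich_incl s1 s2 P1 K1 l1 P2 K2 l2 : dichP s1 P1 K1 l1 -> dichP s2 P2 K2 l2 ->
  s1 <= s2 -> forall n, P2 n *m P1 n = P1 n.
Proof.
move=> [[hK1 hl1] [hP1 hI1 hs1 hu1]] [[hK2 hl2] [hP2 hI2 hs2 hu2]] h12 n.
apply: mx_ext => x; rewrite -mulmxA.
set z := (1%:M - P2 n) *m (P1 n *m x).
suff hz : z = 0.
  by move: hz; rewrite /z mulmxBl mul1mx => /eqP; rewrite subr_eq0 => /eqP.
apply: (@norm_small _ _ (M n) z (HM n)) => e he.
have key : forall k, M n z <= K2 * K1 * expR (- (l2 * k%:R)) * M n x.
  move=> k; set m := (n + k)%N.
  have hnm : (n <= m)%N by rewrite leq_addr.
  have hD : (m%:R - n%:R : R) = k%:R by rewrite /m natrD; lra.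
  have e1 : (1%:M - P2 m) *m cocycle C m n = cocycle C m n *m (1%:M - P2 n).
    rewrite mulmxBl mulmxBr mul1mx mulmx1 (cocycle_intertw (lo:=0%N)) //.
  have hz : z = cocycle C n m *m ((1%:M - P2 m) *m (cocycle C m n *m (P1 n *m x))).
    rewrite (mulmxA (1%:M - P2 m)) e1 -(mulmxA (cocycle C m n)) (mulmxA (cocycle C n m)).
    by rewrite (cocycle_inv (lo:=0%N)) // mul1mx.
  rewrite hz; apply: le_trans (hu2 m n hnm _) _.
  apply: le_trans.
    apply: ler_wpM2l; last exact: (hs1 m n hnm x).
    by apply: mulr_ge0; [exact: ltW | exact: expR_ge0].
  rewrite hD.
  have -> : K2 * expR (- (s2 + l2) * k%:R) * (K1 * expR ((s1 - l1) * k%:R) * M n x)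
    = K2 * K1 * expR (- (s2 + l2) * k%:R + (s1 - l1) * k%:R) * M n x.
    by rewrite expRD; ring.
  apply: bnd => //.
  - by apply: mulr_ge0; apply: ltW.
  - have hk0 : 0 <= (k%:R : R) by [].
    nra.
  - exact: norm_ge0.
have [k hk] := @small_exp _ _ _ _ hl2 (mulr_ge0 (mulr_ge0 (ltW hK2) (ltW hK1)) (@norm_ge0 _ _ (M n) x (HM n))) he.
apply: le_trans (key k) _; by rewrite mulrAC.
Qed.

Lemma rank_const s P K l n : dichP s P K l -> \rank (P n) = \rank (P 0%N).
Proof.
case=> _ [_ hI _ _].
have hU : cocycle C n 0 \in unitmx by apply: (cocycle_unit (lo:=0%N)).
have e : cocycle C n 0 *m P 0%N = P n *m cocycle C n 0.
  exact: (cocycle_intertw (lo:=0%N)).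
have h1 : \rank (P n *m cocycle C n 0) = \rank (P n).
  by apply: mxrankMfree; rewrite row_free_unit.
apply/eqP; rewrite eqn_leq; apply/andP; split.
  by rewrite -h1 -e mxrankM_maxr.
rewrite -h1 -e; rewrite -{1}(mulKmx hU (P 0%N)); exact: mxrankM_maxr.
Qed.

Lemma dich_fill s1 s2 s P1 K1 l1 P2 K2 l2 : dichP s1 P1 K1 l1 -> dichP s2 P2 K2 l2 ->
  s1 <= s -> s <= s2 -> \rank (P1 0%N) = \rank (P2 0%N) ->
  dichP s P2 (K1 * K2 + K2) (Num.min l1 l2).
Proof.
move=> D1 D2 h1 h2 hr.

have hinc := dich_incl D1 D2 (le_trans h1 h2).
have hPP : forall n, P1 n *m P2 n = P2 n.
  move=> n.
  have hsub : ((P1 n)^T <= (P2 n)^T)%MS by rewrite -{1}(hinc n) trmx_mul submxMl.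
  have := (mxrank_leqif_sup hsub).2.
  rewrite !mxrank_tr (rank_const n D1) (rank_const n D2) hr eqxx => /esym hsub2.
  case/submxP: hsub2 => D hD.
  have -> : P2 n = P1 n *m D^T by rewrite -[P2 n]trmxK hD trmx_mul trmxK.
  by case: D1 => _ [hP1 _ _ _]; rewrite mulmxA hP1.
case: D1 => [[hK1 hl1] [hP1 hI1 hs1 hu1]]; case: D2 => [[hK2 hl2] [hP2 hI2 hs2 hu2]].
have hmin1 : Num.min l1 l2 <= l1 by rewrite ge_min lexx.
have hmin2 : Num.min l1 l2 <= l2 by rewrite ge_min lexx orbT.
split; first split.
- by apply: addr_gt0 => //; apply: mulr_gt0.
- by rewrite lt_min hl1 hl2.
split => //.
- move=> m n hnm x.
  rewrite -(hPP n) -(mulmxA (P1 n)); apply: le_trans (hs1 m n hnm _) _.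
  have hb := hs2 n n (leqnn n) x.
  rewrite cocycle_nn mul1mx subrr mulr0 expR0 mulr1 in hb.
  apply: le_trans.
    apply: ler_wpM2l; last exact: hb.
    by apply: mulr_ge0; [exact: ltW | exact: expR_ge0].
  have -> : K1 * expR ((s1 - l1) * (m%:R - n%:R)) * (K2 * M n x) =
    (K1 * K2) * expR ((s1 - l1) * (m%:R - n%:R)) * M n x by ring.
  apply: bnd.
  + by apply: mulr_ge0; apply: ltW.
  + by rewrite lerDl; apply: ltW.
  + apply: ler_wpM2r; first exact: Dge0. lra.
  + exact: norm_ge0.
move=> m n hnm x; apply: le_trans (hu2 m n hnm x) _; apply: bnd.
- exact: ltW.
- by rewrite lerDr; apply: mulr_ge0; apply: ltW.
- apply: ler_wpM2r; first exact: Dge0. lra.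
- exact: norm_ge0.
Qed.

End Core.


Lemma discrete_step (Q : nat -> Prop) r : Q 0%N -> ~ Q r ->
  exists i, (i < r)%N /\ Q i /\ ~ Q i.+1.
Proof.
elim: r => [//|r IH] h0 hr.
case: (pselect (Q r)) => hq; first by exists r.
have [i [hi hh]] := IH h0 hq; exists i; split => //; exact: ltnW.
Qed.

Section Struct.
Variables (R : realType) (rk : R -> nat -> Prop) (d : nat) (g : R).
Hypothesis hd : (0 < d)%N.
Hypothesis Hmono : forall s1 s2 k1 k2, rk s1 k1 -> rk s2 k2 -> s1 <= s2 -> (k1 <= k2)%N.
Hypothesis Hopen : forall s k, rk s k -> exists e, 0 < e /\ forall s', `|s - s'| < e -> rk s' k.
Hypothesis Hconv : forall s1 s2 s k, rk s1 k -> rk s2 k -> s1 <= s -> s <= s2 -> rk s k.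
Hypothesis Hle : forall s k, rk s k -> (k <= d)%N.
Hypothesis Hhi : forall s, g < s -> rk s d.
Hypothesis Hlo : forall s, s < - g -> rk s 0%N.

Lemma open2 s k : rk s k -> exists e, 0 < e /\ rk (s + e) k /\ rk (s - e) k.
Proof.
move=> /Hopen [e [he h]]; exists (e / 2); split; first by lra.
split; apply: h.
- by rewrite opprD addrA subrr add0r normrN ger0_norm; lra.
- by rewrite opprB addrC subrK ger0_norm; lra.
Qed.

Theorem spectral_struct : exists (r : nat) (a b : nat -> R),
  [/\ (1 <= r <= d)%N, (forall i, (i < r)%N -> a i <= b i),
      (forall i, (i.+1 < r)%N -> b i < a i.+1) &
      forall s, (forall k, ~ rk s k) <-> exists i, (i < r)%N /\ a i <= s <= b i].
Proof.
pose V k := `[< exists s, rk s k >].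
pose lst := [seq k <- iota 0 d.+1 | V k].
pose v i := nth 0%N lst i.
pose r := (size lst).-1.
pose L k := [set s | rk s k].
have hsort : sorted ltn lst.
  by apply: sorted_filter; [exact: ltn_trans | exact: iota_ltn_sorted].
have hin : forall s k, rk s k -> k \in lst.
  move=> s k h; rewrite mem_filter mem_iota /= add0n ltnS (Hle h) andbT.
  by apply/asboolP; exists s.
have hmemv : forall i, (i < size lst)%N -> exists s, rk s (v i).
  by move=> i hi; have := mem_nth 0%N hi; rewrite mem_filter => /andP[/asboolP].
have hlt : forall i j, (i < j)%N -> (j < size lst)%N -> (v i < v j)%N.
  move=> i j hij hj.
  by apply: (sorted_ltn_nth ltn_trans 0%N hsort) => //; rewrite inE // (ltn_trans hij).
have hV0 : V 0%N by apply/asboolP; exists (- g - 1); apply: Hlo; lra.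
have hlst : lst = 0%N :: [seq k <- iota 1 d | V k] by rewrite /lst /= hV0.
have hsz : (2 <= size lst)%N.
  rewrite hlst /= ltnS lt0n size_eq0; apply/eqP => h.
  have : d \in [seq k <- iota 1 d | V k].
    rewrite mem_filter mem_iota hd /= add1n ltnSn andbT.
    by apply/asboolP; exists (g + 1); apply: Hhi; lra.
  by rewrite h.
have hszd : (size lst <= d.+1)%N.
  by rewrite size_filter; apply: leq_trans (count_size _ _) _; rewrite size_iota.
have hr1 : (1 <= r)%N by rewrite /r; case: (size lst) hsz => [|[|n]].
have hrs : (r < size lst)%N by rewrite /r; case: (size lst) hsz => [|n].
have hv0 : v 0%N = 0%N by rewrite /v hlst.
have hvr : v r = d.
  have hvle : forall i, (i < size lst)%N -> (v i <= d)%N.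
    move=> i hi; have := mem_nth 0%N hi; rewrite mem_filter mem_iota => /andP[_].
    by rewrite add0n ltnS.
  apply/eqP; rewrite eqn_leq hvle //=.
  have hd' : d \in lst by apply: (hin (g + 1)); apply: Hhi; lra.
  have hj := hd'; rewrite -index_mem in hj.
  rewrite -{1}(nth_index 0%N hd') -/(v _).
  have : (index d lst <= r)%N by rewrite /r -ltnS prednK // (leq_trans _ hsz).
  rewrite leq_eqVlt => /orP[/eqP -> //|hl]; exact: ltnW (hlt _ _ hl hrs).
have sep : forall i j u w, (i < j)%N -> (j < size lst)%N -> rk u (v i) -> rk w (v j) -> u < w.
  move=> i j u w hij hj hu hw; rewrite ltNge; apply/negP => hwu.
  have := Hmono hw hu hwu; rewrite leqNgt (hlt _ _ hij hj) //.
have Lne : forall i, (i < size lst)%N -> L (v i) !=set0.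
  by move=> i hi; have [s hs] := hmemv i hi; exists s.
have hub : forall i, (i < r)%N -> has_ubound (L (v i)).
  move=> i hi; have [w hw] := hmemv i.+1 (leq_ltn_trans hi hrs).
  by exists w => u hu; apply: ltW; apply: (sep i i.+1) => //; apply: leq_ltn_trans hi hrs.
have hlb : forall i, (i < r)%N -> has_lbound (L (v i.+1)).
  move=> i hi; have [u hu] := hmemv i (ltn_trans hi hrs).
  by exists u => w hw; apply: ltW; apply: (sep i i.+1) => //; apply: leq_ltn_trans hi hrs.
exists r, (fun i => sup (L (v i))), (fun i => inf (L (v i.+1))); split.
- by rewrite hr1 /r -ltnS prednK // (leq_trans _ hsz).
- move=> i hi; apply: ge_sup; first exact: Lne (ltn_trans hi hrs).
  move=> u hu; apply: lb_le_inf; first exact: Lne (leq_ltn_trans hi hrs).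
  by move=> w hw; apply: ltW; apply: (sep i i.+1) => //; apply: leq_ltn_trans hi hrs.
- move=> i hi.
  have hi' : (i < r)%N by apply: ltn_trans hi.
  have [w hw] := hmemv i.+1 (ltn_trans hi hrs).
  have [e [he [hwe _]]] := open2 hw.
  have h1 : inf (L (v i.+1)) <= w by apply: ge_inf (hlb i hi') _ hw.
  have h2 : w + e <= sup (L (v i.+1)) by apply: ub_le_sup (hub i.+1 hi) _ hwe.
  lra.
move=> s; split.
- move=> hs.
  pose Q j := exists u, rk u (v j) /\ u < s.
  have hsg : - g <= s by rewrite leNgt; apply/negP => h; exact: (hs 0%N (Hlo h)).
  have hsg' : s <= g by rewrite leNgt; apply/negP => h; exact: (hs d (Hhi h)).
  have hQ0 : Q 0%N by exists (- g - 1); rewrite hv0; split; [apply: Hlo|]; lra.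
  have hQr : ~ Q r.
    move=> [u [hu hus]]; rewrite hvr in hu; apply: (hs d).
    apply: (Hconv hu (Hhi (ltr_pwDr ltr01 (lexx g)))); [exact: ltW | lra].
  have [i [hi [[u [hu hus]] hnQ]]] := discrete_step hQ0 hQr.
  exists i; split => //; apply/andP; split.
    apply: ge_sup; first exact: Lne (ltn_trans hi hrs).
    move=> w hw; rewrite leNgt; apply/negP => hsw.
    by apply: (hs (v i)); apply: (Hconv hu hw); apply: ltW.
  apply: lb_le_inf; first exact: Lne (leq_ltn_trans hi hrs).
  move=> w hw; rewrite leNgt; apply/negP => hws.
  by apply: hnQ; exists w.
- move=> [i [hi /andP[ha hb]]] k hk.
  have hk' := hin _ _ hk.
  set j := index k lst.
  have hj : (j < size lst)%N by rewrite index_mem.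
  have hvj : v j = k by rewrite /v nth_index.
  rewrite -hvj in hk.
  have [e [he [hse hse']]] := open2 hk.
  case: (leqP j i) => hji.
    have : s + e <= sup (L (v i)).
      move: hji; rewrite leq_eqVlt => /orP[/eqP hji|hji].
        by rewrite -hji; apply: ub_le_sup (hub _ _) _ hse; rewrite hji.
      have [u hu] := hmemv i (ltn_trans hi hrs).
      have := sep _ _ _ _ hji (ltn_trans hi hrs) hse hu.
      have := ub_le_sup (hub i hi) hu; lra.
    lra.
  have : inf (L (v i.+1)) <= s - e.
    move: hji; rewrite leq_eqVlt => /orP[/eqP hji|hji].
      by rewrite -hji in hse'; apply: ge_inf (hlb i hi) _ hse'.
    have [w hw] := hmemv i.+1 (leq_ltn_trans hi hrs).
    have := sep _ _ _ _ hji hj hw hse'.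
    have := ge_inf (hlb i hi) hw; lra.
  lra.
Qed.

End Struct.


Theorem core_spectrum (R : realType) (d : nat) (C : nat -> 'M[R]_d)
  (M : nat -> 'cV[R]_d -> R) (Kg g : R) :
  (0 < d)%N ->
  (forall j, (0 <= j)%N -> C j \in unitmx) ->
  (forall n, is_norm (M n)) -> 0 < Kg ->
  (forall m n, (n <= m)%N -> forall x,
    M m (cocycle C m n *m x) <= Kg * expR (g * (m%:R - n%:R)) * M n x /\
    M n (cocycle C n m *m x) <= Kg * expR (g * (m%:R - n%:R)) * M m x) ->
  exists (r : nat) (a b : nat -> R),
  [/\ (1 <= r <= d)%N, (forall i, (i < r)%N -> a i <= b i),
      (forall i, (i.+1 < r)%N -> b i < a i.+1) &
      forall s, (~ exists P K lam, dichP C M s P K lam) <->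
        exists i, (i < r)%N /\ a i <= s <= b i].
Proof.
move=> hd HC HM hKg Hgr.
have := @spectral_struct R (rkrel C M) d g hd.
case.
- move=> s1 s2 k1 k2 [P1 [K1 [l1 [D1 <-]]]] [P2 [K2 [l2 [D2 <-]]]] h12.
  rewrite -(dich_incl HC HM D1 D2 h12 0%N); exact: mxrankM_maxl.
- move=> s k [P [K [l [D hk]]]]; exists l; split; first by case: D => [[]].
  move=> s' hs'; exists P, K, (l - `|s - s'|); split => //.
  exact: dichP_open.
- move=> s1 s2 s k [P1 [K1 [l1 [D1 h1]]]] [P2 [K2 [l2 [D2 h2]]]] hs1 hs2.
  exists P2, (K1 * K2 + K2), (Num.min l1 l2); split => //.
  by apply: (dich_fill HC HM D1 D2) => //; rewrite h1 h2.
- by move=> s k [P [K [l [_ <-]]]]; exact: rank_leq_col.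
- move=> s hs; exists (fun _ => 1%:M), Kg, (s - g); split; last exact: mxrank1.
  exact: dich_hi.
- move=> s hs; exists (fun _ => 0), Kg, (- s - g); split; last exact: mxrank0.
  exact: dich_lo.
move=> r [a [b [h1 h2 h3 h4]]]; exists r, a, b; split => // s.
rewrite -h4; split.
- by move=> hn k [P [K [l [D _]]]]; apply: hn; exists P, K, l.
- by move=> hn [P [K [l D]]]; apply: (hn (\rank (P 0%N))); exists P, K, l.
Qed.


Section Helpers.
Variable R : realType.

Lemma powR_ratio (p q : nat) (c : R) : (0 < p)%N -> (0 < q)%N ->
  ((p%:R / q%:R) `^ c) = expR (c * (ln (p%:R : R) - ln (q%:R : R))).
Proof.
move=> hp hq; have hp' : (0 : R) < p%:R by rewrite ltr0n.
have hq' : (0 : R) < q%:R by rewrite ltr0n.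
rewrite /powR gt_eqF ?divr_gt0 // lnM ?posrE ?invr_gt0 // lnV ?posrE //.
Qed.

Lemma ln2X (n : nat) : ln (((2 ^ n)%N)%:R : R) = n%:R * ln 2.
Proof. by rewrite natrX lnXn // mulr_natl. Qed.

Lemma ln2_gt0 : (0 : R) < ln 2.
Proof. by apply: ln_gt0; rewrite ltr1n. Qed.

Lemma shift_le (X Y K K' u w v : R) : 0 <= K -> K <= K' -> 0 <= Y ->
  X <= K * expR w * Y -> w + u <= v -> expR u * X <= K' * expR v * Y.
Proof.
move=> hK hKK hY hX hv; apply: le_trans.
  apply: ler_wpM2l; [exact: expR_ge0 | exact: hX].
have -> : expR u * (K * expR w * Y) = K * expR (w + u) * Y by rewrite expRD; ring.
exact: bnd.
Qed.

Lemma unshift_le (X Y K u v w : R) : 0 <= K -> 0 <= Y ->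
  expR u * X <= K * expR v * Y -> v - u = w -> X <= K * expR w * Y.
Proof.
move=> hK hY h hw.
have -> : X = expR (- u) * (expR u * X) by rewrite mulrA -expRD addNr expR0 mul1r.
apply: shift_le h _ => //; rewrite -hw; lra.
Qed.

Lemma prod_bound (c w L : R) : - L <= w -> w <= L -> c * w <= `|c| * L.
Proof.
move=> h1 h2; apply: le_trans (ler_norm _) _; rewrite normrM.
apply: ler_wpM2l => //; rewrite ler_norml; lra.
Qed.

End Helpers.

Lemma fw_ext (R : realType) d (C C' : nat -> 'M[R]_d) n k :
  (forall j, (n <= j)%N -> C j = C' j) -> cocycle_fw C n k = cocycle_fw C' n k.
Proof.
move=> h; elim: k => [//|k IH] /=; by rewrite IH h // leq_addr.
Qed.

Lemma cocycle_ext (R : realType) d (C C' : nat -> 'M[R]_d) lo a b :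
  (forall j, (lo <= j)%N -> C j = C' j) -> (lo <= a)%N -> (lo <= b)%N ->
  cocycle C a b = cocycle C' a b.
Proof.
move=> h ha hb; rewrite /cocycle; case: leqP => hab.
  by rewrite (fw_ext (C' := C')) // => j hj; apply: h; apply: leq_trans hj.
by rewrite (fw_ext (C' := C')) // => j hj; apply: h; apply: leq_trans hj.
Qed.

Section Dyadic.
Variables (R : realType) (d : nat) (A : nat -> 'M[R]_d) (N : nat -> 'cV[R]_d -> R).
Hypothesis HA : forall n, (0 < n)%N -> A n \in unitmx.
Hypothesis HN : forall n, (0 < n)%N -> is_norm (N n).
Variables (KA aA : R).
Hypothesis hKA : 0 < KA.
Hypothesis haA : 0 < aA.
Hypothesis HAg : forall m n, (0 < n)%N -> (n <= m)%N -> forall x : 'cV[R]_d,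
       N m (cocycle A m n *m x) <= KA * ((m%:R / n%:R) `^ aA) * N n x /\
       N n (cocycle A n m *m x) <= KA * ((m%:R / n%:R) `^ aA) * N m x.

Definition Bm n := cocycle A (2 ^ n.+1) (2 ^ n).
Definition Ntd n := N (2 ^ n).

Lemma HA1 j : (1 <= j)%N -> A j \in unitmx.
Proof. exact: HA. Qed.

Lemma pow2_gt0 n : (1 <= 2 ^ n)%N.
Proof. by rewrite expn_gt0. Qed.

Lemma Bm_unit j : (0 <= j)%N -> Bm j \in unitmx.
Proof. by move=> _; apply: (cocycle_unit HA1); apply: pow2_gt0. Qed.

Lemma HNt n : is_norm (Ntd n).
Proof. exact: HN (pow2_gt0 n). Qed.

Lemma cocycleA_inv a b : (1 <= a)%N -> (1 <= b)%N ->
  cocycle A a b = invmx (cocycle A b a).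
Proof.
move=> ha hb; apply: invmx_uniq; first exact: (cocycle_unit HA1).
exact: (cocycle_inv HA1).
Qed.

Lemma cocycleB m n : cocycle Bm m n = cocycle A (2 ^ m) (2 ^ n).
Proof.
have hF : forall k, Fb Bm 0 k = cocycle A (2 ^ k) 1.
  rewrite /Fb => k; rewrite subn0; elim: k => [|k IH] /=.
    by rewrite expn0 cocycle_nn.
  by rewrite IH add0n /Bm (cocycle_mul HA1) // pow2_gt0.
rewrite (cocycleF Bm_unit) // !hF -(cocycleA_inv (leqnn 1) (pow2_gt0 n)).
by rewrite (cocycle_mul HA1) // pow2_gt0.
Qed.

Lemma Bgrowth : forall m n, (n <= m)%N -> forall x,
    Ntd m (cocycle Bm m n *m x) <= KA * expR (aA * ln 2 * (m%:R - n%:R)) * Ntd n x /\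
    Ntd n (cocycle Bm n m *m x) <= KA * expR (aA * ln 2 * (m%:R - n%:R)) * Ntd m x.
Proof.
move=> m n hnm x; rewrite !cocycleB.
have hle : (2 ^ n <= 2 ^ m)%N by rewrite leq_exp2l.
have [h1 h2] := HAg (pow2_gt0 n) hle x.
rewrite powR_ratio ?pow2_gt0 // !ln2X in h1 h2.
have -> : aA * ln 2 * (m%:R - n%:R) = aA * (m%:R * ln 2 - n%:R * ln 2) by ring.
by split.
Qed.

Lemma Bscale (s : R) m n :
  cocycle (fun j => expR (- s) *: Bm j) m n = expR (- s * (m%:R - n%:R)) *: cocycle Bm m n.
Proof.
have -> : (fun j => expR (- s) *: Bm j) =
          (fun j => expR ((fun k : nat => - s * k%:R) j.+1 - (fun k : nat => - s * k%:R) j) *: Bm j).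
  apply: funext => j /=; congr (expR _ *: _); rewrite -natr1; ring.
rewrite (cocycle_scale _ Bm_unit) //; congr (expR _ *: _); ring.
Qed.

Lemma ED_iff (c : R) : 0 < c ->
  strong_exp_dichotomy (fun n => c^-1 *: Bm n) Ntd <->
  exists P K lam, dichP Bm Ntd (ln c) P K lam.
Proof.
move=> hc.
have hcinv : c^-1 = expR (- ln c) by rewrite expRN lnK.
rewrite hcinv.
have he0 : forall t : R, expR t != 0 by move=> t; rewrite gt_eqF ?expR_gt0.
split.
- move=> [K [a [lam [P [[hK hl hla] [hP hI hb]]]]]].
  exists P, K, lam; split; first by split.
  split => //.
  + move=> n; have := hI n; rewrite -!scalemxAl -scalemxAr.
    exact: (scalerI (he0 _)).
  + move=> m n hnm x; have [h1 _ _ _] := hb m n hnm x.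
    rewrite Bscale -scalemxAl normZp ?expR_ge0 // in h1; last exact: HNt.
    apply: (unshift_le _ _ h1); [exact: ltW | exact: norm_ge0 _ (HNt n) | ring].
  + move=> m n hnm x; have [_ h2 _ _] := hb m n hnm x.
    rewrite Bscale -scalemxAl normZp ?expR_ge0 // in h2; last exact: HNt.
    apply: (unshift_le _ _ h2); [exact: ltW | exact: norm_ge0 _ (HNt m) | ring].
- move=> [P [K [lam [[hK hl] [hP hI hs hu]]]]].
  exists (K + KA), (lam + aA * ln 2 + `|ln c|), lam, P; split.
    split => //; first exact: addr_gt0.
    rewrite -addrA lerDl; apply: addr_ge0 => //.
    by apply: mulr_ge0; [exact: ltW | exact: ltW (ln2_gt0 R)].
  split => //.
  + by move=> n; rewrite -!scalemxAl -scalemxAr hI.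
  have hD : forall m n, (n <= m)%N -> 0 <= (m%:R - n%:R : R) by move=> m n; exact: Dge0.
  move=> m n hnm x; rewrite !Bscale -!scalemxAl; split.
  + rewrite (normZp _ (HNt _) (expR_ge0 _)); apply: shift_le (hs m n hnm x) _.
    * exact: ltW.
    * by rewrite lerDl ltW.
    * exact: norm_ge0 _ (HNt n).
    * have := hD m n hnm; nra.
  + rewrite (normZp _ (HNt _) (expR_ge0 _)); apply: shift_le (hu m n hnm x) _.
    * exact: ltW.
    * by rewrite lerDl ltW.
    * exact: norm_ge0 _ (HNt m).
    * have := hD m n hnm; nra.
  + rewrite (normZp _ (HNt _) (expR_ge0 _)); apply: shift_le (Bgrowth hnm x).1 _.
    * exact: ltW.
    * by rewrite lerDr ltW.
    * exact: norm_ge0 _ (HNt n).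
    * have := hD m n hnm; have := ler_norm (- ln c); rewrite normrN; nra.
  + rewrite (normZp _ (HNt _) (expR_ge0 _)); apply: shift_le (Bgrowth hnm x).2 _.
    * exact: ltW.
    * by rewrite lerDr ltW.
    * exact: norm_ge0 _ (HNt m).
    * have := hD m n hnm; have := ler_norm (ln c); nra.
Qed.

End Dyadic.


Lemma tlog_facts (R : realType) (k : nat) : (1 <= k)%N ->
  [/\ (1 <= 2 ^ trunc_log 2 k)%N, (2 ^ trunc_log 2 k <= k)%N,
      (trunc_log 2 k)%:R * ln (2 : R) <= ln (k%:R : R) &
      ln (k%:R : R) < (trunc_log 2 k)%:R * ln (2 : R) + ln 2].
Proof.
move=> hk; have h1 := trunc_logP (isT : (1 < 2)%N) hk.
have h2 := trunc_log_ltn k (isT : (1 < 2)%N).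
have hk' : (0 : R) < k%:R by rewrite ltr0n.
split; first exact: pow2_gt0.
- exact: h1.
- rewrite -ln2X ler_ln ?posrE ?ltr0n ?pow2_gt0 // ler_nat //.
- have -> : (trunc_log 2 k)%:R * ln (2 : R) + ln 2 = (trunc_log 2 k).+1%:R * ln 2.
    by rewrite -natr1; ring.
  by rewrite -ln2X ltr_ln ?posrE ?ltr0n ?pow2_gt0 // ltr_nat.
Qed.

Section PD.
Variables (R : realType) (d : nat) (A : nat -> 'M[R]_d) (N : nat -> 'cV[R]_d -> R).
Hypothesis HA : forall n, (0 < n)%N -> A n \in unitmx.
Hypothesis HN : forall n, (0 < n)%N -> is_norm (N n).
Variables (KA aA : R).
Hypothesis hKA : 0 < KA.
Hypothesis haA : 0 < aA.
Hypothesis HAg : forall m n, (0 < n)%N -> (n <= m)%N -> forall x : 'cV[R]_d,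
       N m (cocycle A m n *m x) <= KA * ((m%:R / n%:R) `^ aA) * N n x /\
       N n (cocycle A n m *m x) <= KA * ((m%:R / n%:R) `^ aA) * N m x.
Variable tau : R.

Definition Dm n := ((n.+1)%:R / n%:R) `^ (- tau) *: A n.

Lemma HA1' j : (1 <= j)%N -> A j \in unitmx.
Proof. exact: HA. Qed.

Lemma Dm_unit j : (1 <= j)%N -> Dm j \in unitmx.
Proof.
move=> hj; rewrite unitmxZ ?HA // unitfE gt_eqF // powR_gt0 // divr_gt0 // ltr0n //.
Qed.

Lemma cocycleD a b : (1 <= a)%N -> (1 <= b)%N ->
  cocycle Dm a b = expR (- tau * (ln (a%:R : R) - ln (b%:R : R))) *: cocycle A a b.
Proof.
move=> ha hb.
rewrite (cocycle_ext (C' := fun j => expR ((fun k : nat => - tau * ln (k%:R : R)) j.+1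
           - (fun k : nat => - tau * ln (k%:R : R)) j) *: A j) (lo := 1%N)) //.
  by rewrite (cocycle_scale _ HA1') //; congr (expR _ *: _); ring.
move=> j hj; rewrite /Dm powR_ratio //; congr (expR _ *: _); ring.
Qed.

Lemma HNpos n : (0 < n)%N -> forall x, 0 <= N n x.
Proof. by move=> hn x; apply: norm_ge0 _ (HN hn). Qed.

Lemma PD_to_dich : strong_poly_dichotomy Dm N ->
  exists P K lam, dichP (Bm A) (Ntd N) (tau * ln 2) P K lam.
Proof.
move=> [K [a [lam [Pt [[hK hl hla] [hP hI hb]]]]]].
have l2p := ln2_gt0 R.
exists (fun n => Pt (2 ^ n)%N), K, (lam * ln 2); split.
  by split => //; apply: mulr_gt0.
split.
- by move=> n; apply: hP; apply: pow2_gt0.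
- move=> n; have := cocycle_intertw Dm_unit hI (pow2_gt0 n.+1) (pow2_gt0 n).
  rewrite cocycleD ?pow2_gt0 // -scalemxAl -scalemxAr.
  by apply: scalerI; rewrite gt_eqF ?expR_gt0.
- move=> m n hnm x.
  have hle : (2 ^ n <= 2 ^ m)%N by rewrite leq_exp2l.
  have [h1 _ _ _] := hb _ _ (pow2_gt0 n) hle x.
  rewrite cocycleD ?pow2_gt0 // -scalemxAl (normZp _ (HN (pow2_gt0 _)) (expR_ge0 _)) in h1.
  rewrite powR_ratio ?pow2_gt0 // !ln2X in h1.
  rewrite (cocycleB HA) /Ntd; apply: (unshift_le _ _ h1); first exact: ltW.
    exact: norm_ge0 _ (HN (pow2_gt0 _)).
  ring.
- move=> m n hnm x.
  have hle : (2 ^ n <= 2 ^ m)%N by rewrite leq_exp2l.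
  have [_ h2 _ _] := hb _ _ (pow2_gt0 n) hle x.
  rewrite cocycleD ?pow2_gt0 // -scalemxAl (normZp _ (HN (pow2_gt0 _)) (expR_ge0 _)) in h2.
  rewrite powR_ratio ?pow2_gt0 // !ln2X in h2.
  rewrite (cocycleB HA) /Ntd; apply: (unshift_le _ _ h2); first exact: ltW.
    exact: norm_ge0 _ (HN (pow2_gt0 _)).
  ring.
Qed.

End PD.


Section PD2.
Variables (R : realType) (d : nat) (A : nat -> 'M[R]_d) (N : nat -> 'cV[R]_d -> R).
Hypothesis HA : forall n, (0 < n)%N -> A n \in unitmx.
Hypothesis HN : forall n, (0 < n)%N -> is_norm (N n).
Variables (KA aA : R).
Hypothesis hKA : 0 < KA.
Hypothesis haA : 0 < aA.
Hypothesis HAg : forall m n, (0 < n)%N -> (n <= m)%N -> forall x : 'cV[R]_d,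
       N m (cocycle A m n *m x) <= KA * ((m%:R / n%:R) `^ aA) * N n x /\
       N n (cocycle A n m *m x) <= KA * ((m%:R / n%:R) `^ aA) * N m x.
Variable tau : R.
Variables (P : nat -> 'M[R]_d) (Kd lam : R).
Hypothesis hD : dichP (Bm A) (Ntd N) (tau * ln 2) P Kd lam.

Let HA1 := HA1' HA.

Definition Pt k := cocycle A k 1 *m P 0%N *m cocycle A 1 k.

Lemma Pt_rep k l : (1 <= k)%N -> Pt k = cocycle A k (2 ^ l) *m P l *m cocycle A (2 ^ l) k.
Proof.
move=> hk; case: hD => _ [_ hI _ _].
have e1 := cocycle_intertw (Bm_unit HA) (fun j (_ : (0 <= j)%N) => hI j) (leq0n l) (leq0n 0).
have eP : P l = cocycle (Bm A) l 0 *m P 0%N *m cocycle (Bm A) 0 l.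
  by rewrite e1 -mulmxA (cocycle_inv (Bm_unit HA)) // mulmx1.
rewrite eP !(cocycleB HA) expn0 !mulmxA (cocycle_mul HA1) ?pow2_gt0 //.
by rewrite -mulmxA (cocycle_mul HA1) ?pow2_gt0.
Qed.

Lemma Pt_proj k : (0 < k)%N -> Pt k *m Pt k = Pt k.
Proof.
move=> hk; case: hD => _ [hP _ _ _]; rewrite /Pt.
rewrite -!mulmxA (mulmxA (cocycle A 1 k)) (cocycle_inv HA1) // mul1mx.
by rewrite (mulmxA (P 0%N)) hP.
Qed.

Lemma Pt_intertw k : (0 < k)%N -> Dm A tau k *m Pt k = Pt k.+1 *m Dm A tau k.
Proof.
move=> hk; rewrite /Dm -scalemxAl -scalemxAr; congr (_ *: _).
rewrite -(cocycle_S A k) /Pt !mulmxA (cocycle_mul HA1) //.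
by rewrite -!mulmxA (cocycle_mul HA1).
Qed.


Let l2 := ln (2 : R).
Let lam' := lam / l2.
Let c0 := 2 * aA * l2 + (lam' + `|tau|) * l2.
Definition Kp := KA * KA * Kd * expR c0 + KA.
Definition ap := aA + `|tau| + lam'.

Let l2p : 0 < l2. Proof. exact: ln2_gt0. Qed.
Let hlam : lam = lam' * l2. Proof. by rewrite /lam' divfK // gt_eqF. Qed.
Let hKd : 0 < Kd. Proof. by case: hD => [[]]. Qed.
Let hl : 0 < lam. Proof. by case: hD => [[]]. Qed.
Let hlam' : 0 < lam'. Proof. exact: divr_gt0. Qed.
Let hKp0 : 0 <= KA * KA * Kd * expR c0.
Proof. apply: mulr_ge0; last exact: expR_ge0. apply: mulr_ge0; last exact: ltW. by apply: mulr_ge0; apply: ltW. Qed.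

Let HNm k x : (0 < k)%N -> 0 <= N k x.
Proof. by move=> hk; apply: norm_ge0 _ (HN hk). Qed.

Lemma U_ge0 m n : (1 <= n)%N -> (n <= m)%N -> 0 <= ln (m%:R : R) - ln (n%:R : R).
Proof.
move=> hn hnm; rewrite subr_ge0 ler_ln ?posrE ?ltr0n ?ler_nat //; exact: leq_trans hnm.
Qed.

Lemma stab_bound m n : (0 < n)%N -> (n <= m)%N -> forall x,
  N m (cocycle (Dm A tau) m n *m (Pt n *m x)) <= Kp * ((m%:R / n%:R) `^ (- lam')) * N n x.
Proof.
move=> hn hnm x; have hm : (0 < m)%N by apply: leq_trans hnm.
case: hD => _ [_ _ hs _].
have [hn1 hn2 hn3 hn4] := tlog_facts R hn.
have [hm1 hm2 hm3 hm4] := tlog_facts R hm.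
set i := trunc_log 2 n in hn1 hn2 hn3 hn4; set l := trunc_log 2 m in hm1 hm2 hm3 hm4.
have hil : (i <= l)%N by apply: leq_trunc_log.
have hmat : cocycle A m n *m (Pt n *m x) = cocycle A m (2 ^ l) *m (cocycle (Bm A) l i
              *m (P i *m (cocycle A (2 ^ i) n *m x))).
  rewrite (Pt_rep i hn) (cocycleB HA) !mulmxA !(cocycle_mul HA1) // pow2_gt0.
rewrite powR_ratio // (cocycleD HA) // -scalemxAl (normZp _ (HN hm) (expR_ge0 _)) hmat.
set y := cocycle A (2 ^ i) n *m x.
set w := cocycle (Bm A) l i *m (P i *m y).
have g1 := (HAg (pow2_gt0 l) hm2 w).1.
have g2 := hs l i hil y.
have g3 := (HAg (pow2_gt0 i) hn2 x).2.
rewrite powR_ratio ?pow2_gt0 // ln2X in g1.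
rewrite powR_ratio ?pow2_gt0 // ln2X in g3.
rewrite /Ntd in g2.
apply: le_trans.
  apply: ler_wpM2l; first exact: expR_ge0.
  apply: le_trans g1 _; apply: ler_wpM2l.
    by apply: mulr_ge0; [exact: ltW | exact: expR_ge0].
  apply: le_trans g2 _; apply: ler_wpM2l.
    by apply: mulr_ge0; [exact: ltW | exact: expR_ge0].
  exact: g3.
set E := - tau * (ln (m%:R : R) - ln (n%:R : R)) + aA * (ln (m%:R : R) - l%:R * ln 2)
   + (tau * ln 2 - lam) * (l%:R - i%:R) + aA * (ln (n%:R : R) - i%:R * ln 2).
have -> : expR (- tau * (ln (m%:R : R) - ln (n%:R : R))) *
    (KA * expR (aA * (ln (m%:R : R) - l%:R * ln 2)) *
     (Kd * expR ((tau * ln 2 - lam) * (l%:R - i%:R)) *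
      (KA * expR (aA * (ln (n%:R : R) - i%:R * ln 2)) * N n x)))
  = (KA * KA * Kd * expR c0) * expR (E - c0) * N n x.
  have hc : expR c0 * expR (E - c0) = expR E by rewrite -expRD; congr expR; ring.
  transitivity (KA * KA * Kd * expR E * N n x); first by rewrite /E !expRD; ring.
  by rewrite -hc; ring.
apply: bnd => //; [by rewrite lerDl ltW | | exact: HNm].
set U := ln (m%:R : R) - ln (n%:R : R).
set V := (l%:R - i%:R) * l2.
have hUV1 : - l2 <= U - V by rewrite /U /V /l2; lra.
have hUV2 : U - V <= l2 by rewrite /U /V /l2; lra.
have hp := prod_bound (lam' - tau) hUV1 hUV2.
have hnb : `|lam' - tau| <= lam' + `|tau|.
  by apply: le_trans (ler_normB _ _) _; rewrite ger0_norm // ltW.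
have hnb' := ler_wpM2r (ltW l2p) hnb.
have ha1 : aA * (ln (m%:R : R) - l%:R * ln 2) <= aA * l2.
  by apply: ler_wpM2l; [exact: ltW | rewrite /l2; lra].
have ha2 : aA * (ln (n%:R : R) - i%:R * ln 2) <= aA * l2.
  by apply: ler_wpM2l; [exact: ltW | rewrite /l2; lra].
have hE : E = - lam' * U + (lam' - tau) * (U - V) + aA * (ln (m%:R : R) - l%:R * ln 2)
   + aA * (ln (n%:R : R) - i%:R * ln 2).
  by rewrite /E /U /V hlam /l2; ring.
rewrite hE /c0; lra.
Qed.


Lemma unst_bound m n : (0 < n)%N -> (n <= m)%N -> forall x,
  N n (cocycle (Dm A tau) n m *m ((1%:M - Pt m) *m x))
    <= Kp * ((m%:R / n%:R) `^ (- lam')) * N m x.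
Proof.
move=> hn hnm x; have hm : (0 < m)%N by apply: leq_trans hnm.
case: hD => _ [_ _ _ hu].
have [hn1 hn2 hn3 hn4] := tlog_facts R hn.
have [hm1 hm2 hm3 hm4] := tlog_facts R hm.
set i := trunc_log 2 n in hn1 hn2 hn3 hn4; set l := trunc_log 2 m in hm1 hm2 hm3 hm4.
have hil : (i <= l)%N by apply: leq_trunc_log.
have hmat : cocycle A n m *m ((1%:M - Pt m) *m x) = cocycle A n (2 ^ i) *m (cocycle (Bm A) i l
              *m ((1%:M - P l) *m (cocycle A (2 ^ l) m *m x))).
  rewrite (Pt_rep l hm) (cocycleB HA) !mulmxBl !mul1mx !mulmxBr.
  by rewrite !mulmxA !(cocycle_mul HA1) // pow2_gt0.
rewrite powR_ratio // (cocycleD HA) // -scalemxAl (normZp _ (HN hn) (expR_ge0 _)) hmat.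
set y := cocycle A (2 ^ l) m *m x.
set w := cocycle (Bm A) i l *m ((1%:M - P l) *m y).
have g1 := (HAg (pow2_gt0 i) hn2 w).1.
have g2 := hu l i hil y.
have g3 := (HAg (pow2_gt0 l) hm2 x).2.
rewrite powR_ratio ?pow2_gt0 // ln2X in g1.
rewrite powR_ratio ?pow2_gt0 // ln2X in g3.
rewrite /Ntd in g2.
apply: le_trans.
  apply: ler_wpM2l; first exact: expR_ge0.
  apply: le_trans g1 _; apply: ler_wpM2l.
    by apply: mulr_ge0; [exact: ltW | exact: expR_ge0].
  apply: le_trans g2 _; apply: ler_wpM2l.
    by apply: mulr_ge0; [exact: ltW | exact: expR_ge0].
  exact: g3.
set E := - tau * (ln (n%:R : R) - ln (m%:R : R)) + aA * (ln (n%:R : R) - i%:R * ln 2)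
   + - (tau * ln 2 + lam) * (l%:R - i%:R) + aA * (ln (m%:R : R) - l%:R * ln 2).
have -> : expR (- tau * (ln (n%:R : R) - ln (m%:R : R))) *
    (KA * expR (aA * (ln (n%:R : R) - i%:R * ln 2)) *
     (Kd * expR (- (tau * ln 2 + lam) * (l%:R - i%:R)) *
      (KA * expR (aA * (ln (m%:R : R) - l%:R * ln 2)) * N m x)))
  = (KA * KA * Kd * expR c0) * expR (E - c0) * N m x.
  have hc : expR c0 * expR (E - c0) = expR E by rewrite -expRD; congr expR; ring.
  transitivity (KA * KA * Kd * expR E * N m x); first by rewrite /E !expRD; ring.
  by rewrite -hc; ring.
apply: bnd => //; [by rewrite lerDl ltW | | exact: HNm].
set U := ln (m%:R : R) - ln (n%:R : R).
set V := (l%:R - i%:R) * l2.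
have hUV1 : - l2 <= U - V by rewrite /U /V /l2; lra.
have hUV2 : U - V <= l2 by rewrite /U /V /l2; lra.
have hp := prod_bound (tau + lam') hUV1 hUV2.
have hnb : `|tau + lam'| <= lam' + `|tau|.
  by apply: le_trans (ler_normD _ _) _; rewrite (ger0_norm (ltW hlam')) addrC.
have hnb' := ler_wpM2r (ltW l2p) hnb.
have ha1 : aA * (ln (m%:R : R) - l%:R * ln 2) <= aA * l2.
  by apply: ler_wpM2l; [exact: ltW | rewrite /l2; lra].
have ha2 : aA * (ln (n%:R : R) - i%:R * ln 2) <= aA * l2.
  by apply: ler_wpM2l; [exact: ltW | rewrite /l2; lra].
have hE : E = - lam' * U + (tau + lam') * (U - V) + aA * (ln (m%:R : R) - l%:R * ln 2)
   + aA * (ln (n%:R : R) - i%:R * ln 2).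
  by rewrite /E /U /V hlam /l2; ring.
rewrite hE /c0; lra.
Qed.

Lemma fw_bound m n : (0 < n)%N -> (n <= m)%N -> forall x,
  N m (cocycle (Dm A tau) m n *m x) <= Kp * ((m%:R / n%:R) `^ ap) * N n x.
Proof.
move=> hn hnm x; have hm : (0 < m)%N by apply: leq_trans hnm.
have g := (HAg hn hnm x).1; rewrite powR_ratio // in g.
rewrite powR_ratio // (cocycleD HA) // -scalemxAl (normZp _ (HN hm) (expR_ge0 _)).
apply: shift_le g _; [exact: ltW | by rewrite lerDr | exact: HNm |].
have hU := U_ge0 hn hnm.
have h1 := ler_wpM2r hU (ler_norm (- tau)); rewrite normrN in h1.
have h2 : 0 <= lam' * (ln (m%:R : R) - ln (n%:R : R)) by apply: mulr_ge0 => //; exact: ltW.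
rewrite /ap; lra.
Qed.

Lemma bw_bound m n : (0 < n)%N -> (n <= m)%N -> forall x,
  N n (cocycle (Dm A tau) n m *m x) <= Kp * ((m%:R / n%:R) `^ ap) * N m x.
Proof.
move=> hn hnm x; have hm : (0 < m)%N by apply: leq_trans hnm.
have g := (HAg hn hnm x).2; rewrite powR_ratio // in g.
rewrite powR_ratio // (cocycleD HA) // -scalemxAl (normZp _ (HN hn) (expR_ge0 _)).
apply: shift_le g _; [exact: ltW | by rewrite lerDr | exact: HNm |].
have hU := U_ge0 hn hnm.
have h1 := ler_wpM2r hU (ler_norm tau).
have h2 : 0 <= lam' * (ln (m%:R : R) - ln (n%:R : R)) by apply: mulr_ge0 => //; exact: ltW.
rewrite /ap; lra.
Qed.

Lemma dich_to_PD : strong_poly_dichotomy (Dm A tau) N.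
Proof.
exists Kp, ap, lam', Pt; split.
  split => //.
  - by apply: ltr_wpDl.
  - by rewrite /ap lerDr; apply: addr_ge0; [exact: ltW | exact: normr_ge0].
split.
- exact: Pt_proj.
- exact: Pt_intertw.
move=> m n hn hnm x; split.
- exact: stab_bound.
- exact: unst_bound.
- exact: fw_bound.
- exact: bw_bound.
Qed.

End PD2.


Unset Implicit Arguments.

Theorem corollary2p2 (R : realType) (d : nat) (A : nat -> 'M[R]_d)
    (N : nat -> 'cV[R]_d -> R) :
  (0 < d)%N ->
  (forall n, (0 < n)%N -> A n \in unitmx) ->
  (forall n, (0 < n)%N -> is_norm (N n)) ->
  (exists K a : R, 0 < K /\ 0 < a /\
     forall m n, (0 < n)%N -> (n <= m)%N -> forall x : 'cV[R]_d,
       N m (cocycle A m n *m x) <= K * ((m%:R / n%:R) `^ a) * N n x /\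
       N n (cocycle A n m *m x) <= K * ((m%:R / n%:R) `^ a) * N m x) ->
  let B := fun n : nat => cocycle A (2 ^ n.+1) (2 ^ n) in
  let Nt := fun n : nat => N (2 ^ n)%N in
  exists (r : nat) (a b : nat -> R),
    [/\ (1 <= r <= d)%N,
        (forall i, (i < r)%N -> a i <= b i),
        (forall i, (i.+1 < r)%N -> b i < a i.+1),
        Sigma_ED B Nt = \bigcup_(i in [set i : nat | (i < r)%N])
                          [set t : R | a i <= t <= b i] &
        Sigma_PD A N = \bigcup_(i in [set i : nat | (i < r)%N])
                          [set t : R | ln (a i) / ln 2 <= t <= ln (b i) / ln 2]].
Proof.
move=> hd HA HN [K [a [hK [ha HAg]]]] B Nt.
have [r [al [be [h1 h2 h3 h4]]]] :=
  @core_spectrum R d (Bm A) (Ntd N) K (a * ln 2) hd (fun j hj => Bm_unit HA hj)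
    (HNt HN) hK (Bgrowth HA HAg).
have l2p := ln2_gt0 R.
exists r, (fun i => expR (al i)), (fun i => expR (be i)); split => //.
- by move=> i hi; rewrite ler_expR; apply: h2.
- by move=> i hi; rewrite ltr_expR; apply: h3.
- apply/seteqP; split => c /=.
  + move=> [hc hn].
    have : ~ exists P K lam, dichP (Bm A) (Ntd N) (ln c) P K lam.
      by move=> hx; apply: hn; apply/(ED_iff HA HN hK ha HAg hc).
    move/h4 => [i [hi /andP[hl hu]]]; exists i => //=.
    by rewrite -(lnK (x:=c)) ?posrE // !ler_expR hl hu.
  + move=> [i hi /andP[hl hu]].
    have hc : 0 < c by apply: lt_le_trans hl; exact: expR_gt0.
    split => // hE.
    have := (ED_iff HA HN hK ha HAg hc).1 hE.
    apply/h4; exists i; split => //.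
    by rewrite -(expRK (al i)) -(expRK (be i)) !ler_ln ?posrE ?expR_gt0 // hl hu.
- apply/seteqP; split => t /=.
  + move=> hn.
    have : ~ exists P K lam, dichP (Bm A) (Ntd N) (t * ln 2) P K lam.
      by move=> [P [K' [lam hx]]]; apply: hn; exact: (dich_to_PD HA HN hK ha HAg hx).
    move/h4 => [i [hi /andP[hl hu]]]; exists i => //=.
    by rewrite !expRK ler_pdivrMr // ler_pdivlMr // hl hu.
  + move=> [i hi]; rewrite /= !expRK => /andP[hl hu] hP.
    have := PD_to_dich HA HN hP.
    apply/h4; exists i; split => //.
    by rewrite ler_pdivrMr // in hl; rewrite ler_pdivlMr // in hu; rewrite hl hu.
Qed.
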